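(* In the consistent-read iteration defined in the context with step size $\beta=1$, any deterministic $x_0$, any integer $\tau\ge0$ and any deterministic $k(j)$ with $j-\tau\le k(j)\le j$, let $\rho=\max_l\frac1n\sum_{r=1}^n|A_{lr}|$. Then for every $j\ge0$ \[E_{j+1}\le E_j-(1-\rho\tau)\,\mathbb{E}\big[(x_{k(j)}-x^\star,d_j)_A^2\big]+\rho\sum_{t=k(j)}^{j-1}\mathbb{E}\big[(x_{k(t)}-x^\star,d_t)_A^2\big],\] and consequently for every $m\ge1$ \[E_m\le E_0-(1-2\rho\tau)\sum_{i=0}^{m-1}\mathbb{E}\big[(x_{k(i)}-x^\star,d_i)_A^2\big].\]
   Context: Let $n\ge2$ and let $A\in\mathbb{R}^{n\times n}$ be symmetric positive definite with all diagonal entries equal to $1$; let $b\in\mathbb{R}^n$ and $x^\star=A^{-1}b$. Write $(x,y)_A=y^TAx$ and $\|x\|_A=\sqrt{(x,x)_A}$; $e^{(1)},\dots,e^{(n)}$ are the standard basis vectors. Consistent-read iteration: let $d_0,d_1,\dots$ be i.i.d. random vectors, each uniformly distributed on $\{e^{(1)},\dots,e^{(n)}\}$; let $\tau\ge0$ be an integer and $k(0),k(1),\dots$ deterministic integers with $j-\tau\le k(j)\le j$; given $x_0\in\mathbb{R}^n$ and a step size $\beta$, define for $j\ge0$ \[\gamma_j=(x^\star-x_{k(j)},d_j)_A,\qquad x_{j+1}=x_j+\beta\gamma_jd_j.\] Define $E_m=\mathbb{E}[\|x_m-x^\star\|_A^2]$. An empty sum is zero. *)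

(* Defs.v *)
From HB Require Import structures.
From mathcomp Require Import all_boot all_order all_algebra.
Set Implicit Arguments. Unset Strict Implicit. Unset Printing Implicit Defensive.
Import Order.TTheory GRing.Theory Num.Theory.
Local Open Scope ring_scope.

Section Defs.
Variable R : realFieldType.
Variable n : nat.

Definition ipA (A : 'M[R]_n) (x y : 'cV[R]_n) : R := (y^T *m A *m x) 0 0.

(* standard basis vector e^(i+1), index i in {0..n-1} (as a nat) *)
Definition evec (i : nat) : 'cV[R]_n := \col_(r < n) (r == i :> nat)%:R.

(* Given a realisation d : nat -> nat of the indices of d_0, d_1, ...
   (d_j = e^(d j)), hist ... j is the list [x_0; ...; x_j]. *)
Fixpoint hist (A : 'M[R]_n) (xs x0 : 'cV[R]_n) (beta : R) (k : nat -> nat)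
    (d : nat -> nat) (j : nat) : seq 'cV[R]_n :=
  match j with
  | 0 => [:: x0]
  | j'.+1 =>
      let h := hist A xs x0 beta k d j' in
      let xk := nth 0 h (k j') in
      let gamma := ipA A (xs - xk) (evec (d j')) in
      rcons h (last x0 h + (beta * gamma) *: evec (d j'))
  end.

Definition iterate (A : 'M[R]_n) (xs x0 : 'cV[R]_n) (beta : R) (k : nat -> nat)
    (j : nat) (d : nat -> nat) : 'cV[R]_n :=
  nth 0 (hist A xs x0 beta k d j) j.

(* Expectation of a functional f of the first N draws d_0..d_{N-1}, which are
   i.i.d. uniform on {0..n-1}: the average over all N-tuples. *)
Definition Exp (N : nat) (f : (nat -> nat) -> R) : R :=
  (n%:R ^+ N)^-1 *
  \sum_(t : N.-tuple 'I_n) f (fun j => nth 0%N [seq nat_of_ord i | i <- t] j).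

Definition rhoA (A : 'M[R]_n) : R :=
  \big[Num.max/0]_(l < n) (n%:R^-1 * \sum_(r < n) `|A l r|).
End Defs.

(* Main.v *)
Require Import Defs.
From HB Require Import structures.
From mathcomp Require Import all_boot all_order all_algebra.
Import Order.TTheory GRing.Theory Num.Theory.
Local Open Scope ring_scope.

From mathcomp Require Import ring lra zify.
From Stdlib Require Import FunctionalExtensionality.
Set Implicit Arguments. Unset Strict Implicit.



Section Ex.
Variable R : realFieldType.
Variable n : nat.

Definition sf (t : seq 'I_n) : nat -> nat :=
  fun j => nth 0%N [seq nat_of_ord i | i <- t] j.
Definition dcons (i : nat) (d : nat -> nat) : nat -> nat :=
  fun j => match j with 0%N => i | j'.+1 => d j' end.
Definition upd (d : nat -> nat) (p i : nat) : nat -> nat :=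
  fun m => if m == p then i else d m.
Definition SS N (F : (nat -> nat) -> R) := \sum_(t : N.-tuple 'I_n) F (sf t).

Lemma sf_cons (i : 'I_n) (t : seq 'I_n) : sf (i :: t) = dcons i (sf t).
Proof. by apply: functional_extensionality => -[|j]. Qed.

Lemma S_cons N F : SS N.+1 F = \sum_(i < n) SS N (fun d => F (dcons i d)).
Proof.
rewrite /SS pair_big /=.
rewrite (reindex (fun p : 'I_n * N.-tuple 'I_n => [tuple of p.1 :: p.2])) /=.
  by apply: eq_bigr => -[i t] _ /=; rewrite sf_cons.
exists (fun t : N.+1.-tuple 'I_n => (thead t, [tuple of behead t])).
  by move=> [i t] _ /=; rewrite theadE; congr pair; apply: val_inj.
by move=> t _; rewrite [RHS]tuple_eta.
Qed.

Lemma S0 F : SS 0 F = F (fun _ => 0%N).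
Proof.
rewrite /SS (big_pred1 [tuple]) /=.
  by congr F; apply: functional_extensionality => -[|j].
by move=> t /=; apply/esym/eqP; exact: tuple0.
Qed.

Lemma S_add N F G : SS N (fun d => F d + G d) = SS N F + SS N G.
Proof. by rewrite /SS big_split. Qed.
Lemma S_scale N c F : SS N (fun d => c * F d) = c * SS N F.
Proof. by rewrite /SS mulr_sumr. Qed.
Lemma S_sum N (I : Type) (r : seq I) (F : I -> (nat -> nat) -> R) :
  SS N (fun d => \sum_(i <- r) F i d) = \sum_(i <- r) SS N (F i).
Proof. by rewrite /SS exchange_big. Qed.
Lemma S_ext N F G : (forall d, F d = G d) -> SS N F = SS N G.
Proof. by move=> h; apply: eq_bigr. Qed.

Lemma sf_lt (t : seq 'I_n) j : (0 < n)%N -> (sf t j < n)%N.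
Proof.
move=> hn; rewrite /sf; case: (ltnP j (size t)) => h.
  by rewrite (nth_map (@Ordinal n 0 hn)) //.
by rewrite nth_default ?size_map.
Qed.

Lemma S_le N F G : (0 < n)%N ->
  (forall d, (forall m, (d m < n)%N) -> F d <= G d) -> SS N F <= SS N G.
Proof. by move=> hn h; apply: ler_sum => t _; apply: h => m; apply: sf_lt. Qed.

Lemma S_avg N F p : (p < N)%N -> (0 < n)%N ->
  SS N F = SS N (fun d => n%:R^-1 * \sum_(i < n) F (upd d p i)).
Proof.
move=> hp hn; elim: N F p hp => [//|N IH] F [|p] hp.
- rewrite !S_cons.
  have e : forall (i : 'I_n) (i' : 'I_n) d, upd (dcons i d) 0 i' = dcons i' d.
    by move=> i i' d; apply: functional_extensionality => -[|j].
  rewrite [RHS](eq_bigr (fun _ => n%:R^-1 * \sum_(i0<n) SS N (fun d => F (dcons i0 d)))); last first.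
    move=> i _; rewrite -S_sum -S_scale; apply: S_ext => d; congr (_*_).
    by apply: eq_bigr => i0 _; rewrite e.
  have hm : forall y : R, y *+ n = n%:R * y by move=> y; rewrite mulr_natl.
  rewrite sumr_const card_ord hm mulrA mulfV ?mul1r //.
  by rewrite pnatr_eq0 -lt0n.
- rewrite !S_cons; apply: eq_bigr => i _.
  rewrite (IH _ p hp); apply: S_ext => d; congr (_ * _); apply: eq_bigr => i' _.
  by congr F; apply: functional_extensionality => -[|j].
Qed.

Lemma S_marg N F : (forall d d', (forall m, (m < N)%N -> d m = d' m) -> F d = F d') ->
  SS N.+1 F = n%:R * SS N F.
Proof.
elim: N F => [|N IH] F hF.
  rewrite S_cons S0; under eq_bigr do rewrite S0.
  rewrite (eq_bigr (fun _ => F (fun _ => 0%N))); first by rewrite sumr_const card_ord mulr_natl.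
  by move=> i _; apply: hF.
rewrite S_cons (S_cons N) mulr_sumr; apply: eq_bigr => i _; apply: IH.
move=> d d' h; apply: hF => -[|m] //= hm; apply: h. exact: hm.
Qed.

End Ex.



Section It.
Variable R : realFieldType.
Variable n : nat.
Variables (A : 'M[R]_n) (xs x0 : 'cV[R]_n) (beta : R) (k : nat -> nat).
Hypothesis hk : forall j, (k j <= j)%N.

Local Notation h := (hist A xs x0 beta k).
Local Notation x := (iterate A xs x0 beta k).

Lemma size_hist d j : size (h d j) = j.+1.
Proof. by elim: j => //= j IH; rewrite size_rcons IH. Qed.

Lemma nth_hist d j i : (i <= j)%N -> nth 0 (h d j) i = x i d.
Proof.
elim: j => [|j IH] hi.
  by move: hi; rewrite leqn0 => /eqP ->.
rewrite leq_eqVlt in hi; case/orP: hi => [/eqP -> //|hi].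
by rewrite /= nth_rcons size_hist hi IH.
Qed.

Lemma last_hist d j : last x0 (h d j) = x j d.
Proof.
case: j => [//|j]; rewrite /iterate /= last_rcons nth_rcons size_hist ltnn eqxx //.
Qed.

Lemma iterS d j : x j.+1 d =
  x j d + (beta * ipA A (xs - x (k j) d) (@evec R n (d j))) *: @evec R n (d j).
Proof.
rewrite {1}/iterate /= nth_rcons size_hist ltnn eqxx last_hist nth_hist //.
Qed.

Lemma iter_dep j d d' : (forall m, (m < j)%N -> d m = d' m) -> x j d = x j d'.
Proof.
elim: j {-2}j (leqnn j) => [|N IH] j hj hd.
  by move: hj; rewrite leqn0 => /eqP ->.
rewrite leq_eqVlt in hj; case/orP: hj => [/eqP hj|hj]; last by apply: IH.
subst j; rewrite !iterS (IH N) // ?(IH (k N)) ?hd //.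
- by move=> m hm; apply: hd; apply: leq_trans hm (leq_trans (hk N) _).
- by move=> m hm; apply: hd; apply: ltnW.
Qed.
End It.



Section Lin.
Variable R : realFieldType.
Variable n : nat.
Variable A : 'M[R]_n.

Lemma ipAE (x y : 'cV[R]_n) :
  ipA A x y = \sum_(a < n) \sum_(b < n) y b 0 * A b a * x a 0.
Proof.
rewrite /ipA mxE; apply: eq_bigr => a _; rewrite mxE mulr_suml.
by apply: eq_bigr => b _; rewrite mxE.
Qed.

Lemma ipaDl x y z : ipA A (x + y) z = ipA A x z + ipA A y z.
Proof.
rewrite !ipAE -big_split; apply: eq_bigr => a _; rewrite -big_split.
by apply: eq_bigr => b _; rewrite mxE mulrDr.
Qed.
Lemma ipaZl c x z : ipA A (c *: x) z = c * ipA A x z.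
Proof.
rewrite !ipAE mulr_sumr; apply: eq_bigr => a _; rewrite mulr_sumr.
by apply: eq_bigr => b _; rewrite mxE; ring.
Qed.
Lemma ipaDr x y z : ipA A z (x + y) = ipA A z x + ipA A z y.
Proof.
rewrite !ipAE -big_split; apply: eq_bigr => a _; rewrite -big_split.
by apply: eq_bigr => b _; rewrite mxE !mulrDl.
Qed.
Lemma ipaZr c x z : ipA A z (c *: x) = c * ipA A z x.
Proof.
rewrite !ipAE mulr_sumr; apply: eq_bigr => a _; rewrite mulr_sumr.
by apply: eq_bigr => b _; rewrite mxE; ring.
Qed.
Lemma ipaNl x z : ipA A (- x) z = - ipA A x z.
Proof. by rewrite -scaleN1r ipaZl mulN1r. Qed.
Lemma ipaNr x z : ipA A z (- x) = - ipA A z x.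
Proof. by rewrite -scaleN1r ipaZr mulN1r. Qed.
Lemma ipaBl x y z : ipA A (x - y) z = ipA A x z - ipA A y z.
Proof. by rewrite ipaDl ipaNl. Qed.
Lemma ipaBr x y z : ipA A z (x - y) = ipA A z x - ipA A z y.
Proof. by rewrite ipaDr ipaNr. Qed.
Lemma ipa_sumr (I : Type) (r : seq I) (F : I -> 'cV[R]_n) z :
  ipA A z (\sum_(i <- r) F i) = \sum_(i <- r) ipA A z (F i).
Proof.
elim: r => [|a r IH]; last by rewrite !big_cons ipaDr IH.
by rewrite !big_nil ipAE big1 // => a _; rewrite big1 // => b _; rewrite mxE; ring.
Qed.

Lemma ipa_sym x y : A^T = A -> ipA A x y = ipA A y x.
Proof.
move=> hA; rewrite !ipAE exchange_big; apply: eq_bigr => a _; apply: eq_bigr => b _.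
by rewrite -{1}hA mxE; ring.
Qed.

Lemma sum_delta (F : 'I_n -> R) (l : 'I_n) :
  \sum_(a < n) F a * ((a : nat) == l)%:R = F l.
Proof.
rewrite (bigD1 l) //= eqxx mulr1 big1 ?addr0 //.
move=> a ha; have -> : ((a : nat) == l) = false by exact: (negbTE ha).
by rewrite mulr0.
Qed.

Lemma ipa_evec (i l : 'I_n) :
  ipA A (evec R n l) (evec R n i) = A i l.
Proof.
rewrite ipAE.
rewrite (eq_bigr (fun a => A i a * ((a:nat) == l)%:R)).
  by rewrite sum_delta.
move=> a _.
rewrite (eq_bigr (fun b => (A b a * (evec R n l) a 0) * ((b:nat) == i)%:R)).
  by rewrite sum_delta mxE.
by move=> b _; rewrite !mxE; ring.
Qed.
End Lin.



Section ExpL.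
Variable R : realFieldType.
Variable n : nat.
Hypothesis hn : (0 < n)%N.

Lemma ExpS N (f : (nat -> nat) -> R) : Exp n N f = (n%:R ^+ N)^-1 * SS n N f.
Proof. by []. Qed.

Lemma Exp_le N (f g : (nat -> nat) -> R) :
  (forall d, (forall m, (d m < n)%N) -> f d <= g d) -> Exp n N f <= Exp n N g.
Proof.
move=> h; rewrite !ExpS; apply: ler_wpM2l; last exact: S_le.
by rewrite invr_ge0 exprn_ge0 ?ler0n.
Qed.

Lemma Exp_add N (f g : (nat -> nat) -> R) :
  Exp n N (fun d => f d + g d) = Exp n N f + Exp n N g.
Proof. by rewrite !ExpS S_add mulrDr. Qed.
Lemma Exp_scale N c (f : (nat -> nat) -> R) :
  Exp n N (fun d => c * f d) = c * Exp n N f.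
Proof. by rewrite !ExpS S_scale mulrCA. Qed.
Lemma Exp_opp N (f : (nat -> nat) -> R) :
  Exp n N (fun d => - f d) = - Exp n N f.
Proof.
rewrite -mulN1r -Exp_scale !ExpS; congr (_ * _); apply: S_ext => d; by rewrite mulN1r.
Qed.
Lemma Exp_sum N (I : Type) (r : seq I) (F : I -> (nat -> nat) -> R) :
  Exp n N (fun d => \sum_(i <- r) F i d) = \sum_(i <- r) Exp n N (F i).
Proof. by rewrite ExpS S_sum mulr_sumr. Qed.
Lemma Exp_ext N (f g : (nat -> nat) -> R) :
  (forall d, f d = g d) -> Exp n N f = Exp n N g.
Proof. by move=> h; rewrite !ExpS (S_ext _ _ h). Qed.

Lemma Exp_marg N (f : (nat -> nat) -> R) :
  (forall d d', (forall m, (m < N)%N -> d m = d' m) -> f d = f d') ->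
  Exp n N.+1 f = Exp n N f.
Proof.
move=> h; rewrite !ExpS S_marg // exprS invfM mulrAC -!mulrA mulrA mulVf ?mul1r ?(mulrC (SS _ _ _)) //.
by rewrite pnatr_eq0 -lt0n.
Qed.

Lemma Exp_margk N m (f : (nat -> nat) -> R) :
  (forall d d', (forall m, (m < N)%N -> d m = d' m) -> f d = f d') ->
  Exp n (N + m) f = Exp n N f.
Proof.
move=> h; elim: m => [|m IH]; first by rewrite addn0.
rewrite addnS Exp_marg // => d d' hd; apply: h => i hi; apply: hd.
exact: leq_trans hi (leq_addr _ _).
Qed.

Lemma Exp_avg N p (f : (nat -> nat) -> R) : (p < N)%N ->
  Exp n N f = Exp n N (fun d => n%:R^-1 * \sum_(i < n) f (upd d p i)).
Proof. by move=> hp; rewrite !ExpS (@S_avg R n N f p hp hn). Qed.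
End ExpL.



Section Main.
Variable R : realFieldType.
Variable n : nat.
Variables (A : 'M[R]_n) (xs x0 : 'cV[R]_n) (k : nat -> nat).
Hypothesis hn : (0 < n)%N.
Hypothesis hsym : A^T = A.
Hypothesis hdiag : forall i : 'I_n, A i i = 1.
Hypothesis hk : forall j, (k j <= j)%N.

Notation x := (iterate A xs x0 1 k).
Definition e j d := x j d - xs.
Definition u j (d : nat -> nat) := evec R n (d j).
Definition s j d := ipA A (e (k j) d) (u j d).

Lemma e_rec j d : e j.+1 d = e j d - s j d *: u j d.
Proof.
rewrite /e /s /u (iterS A xs x0 1 hk) mul1r -[xs - _]opprB ipaNl scaleNr.
by rewrite addrAC.
Qed.

Lemma e_tele a b d : (a <= b)%N ->
  e b d = e a d - \sum_(a <= t < b) s t d *: u t d.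
Proof.
elim: b => [|b IH] hab.
  by move: hab; rewrite leqn0 => /eqP ->; rewrite big_geq // subr0.
rewrite leq_eqVlt in hab; case/orP: hab => [/eqP ->|hab].
  by rewrite big_geq // subr0.
by rewrite e_rec IH // big_nat_recr //= opprD addrA.
Qed.

Lemma e_dep j d d' : (forall m, (m < j)%N -> d m = d' m) -> e j d = e j d'.
Proof. by move=> h; rewrite /e (iter_dep A xs x0 1 hk h). Qed.

Lemma s_dep t d d' : (forall m, (m < k t)%N -> d m = d' m) -> d t = d' t ->
  s t d = s t d'.
Proof. by move=> h ht; rewrite /s /u ht (e_dep (d' := d')). Qed.

Lemma ipa_suml (I : Type) (r : seq I) (F : I -> 'cV[R]_n) z :
  ipA A (\sum_(i <- r) F i) z = \sum_(i <- r) ipA A (F i) z.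
Proof.
rewrite ipa_sym // ipa_sumr; apply: eq_bigr => i _; exact: ipa_sym.
Qed.

Lemma uu j d : (forall m, (d m < n)%N) -> ipA A (u j d) (u j d) = 1.
Proof.
move=> hd; rewrite /u.
by rewrite -[d j]/(nat_of_ord (Ordinal (hd j))) (ipa_evec A) hdiag.
Qed.

Lemma key_eq j d : (forall m, (d m < n)%N) ->
  ipA A (e j.+1 d) (e j.+1 d) = ipA A (e j d) (e j d) - s j d ^+ 2
   + 2 * s j d * \sum_(k j <= t < j) s t d * ipA A (u t d) (u j d).
Proof.
move=> hd.
have h1 : ipA A (e j d) (u j d) =
   s j d - \sum_(k j <= t < j) s t d * ipA A (u t d) (u j d).
  rewrite (e_tele d (hk j)) ipaBl ipa_suml; congr (_ - _).
  by apply: eq_bigr => t _; rewrite ipaZl.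
rewrite e_rec; have hU := uu j hd; move: h1 hU; set E := e j d; set U := u j d => h1 hU; clearbody E U.
rewrite !ipaBl !ipaBr !ipaZl !ipaZr hU (ipa_sym U) // h1.
ring.
Qed.

Lemma abc_le (a b c : R) : 2 * a * b * c <= (a ^+ 2 + b ^+ 2) * `|c|.
Proof.
have [hc|hc] := lerP 0 c.
  rewrite ger0_norm //; have := mulr_ge0 (sqr_ge0 (a - b)) hc.
  rewrite -subr_ge0 => h; rewrite -subr_ge0; apply: le_trans h _.
  by rewrite le_eqVlt; apply/orP; left; apply/eqP; ring.
have hc' : 0 <= - c by rewrite oppr_ge0 ltW.
rewrite ltr0_norm //; have := mulr_ge0 (sqr_ge0 (a + b)) hc'.
rewrite -subr_ge0 => h; rewrite -subr_ge0; apply: le_trans h _.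
by rewrite le_eqVlt; apply/orP; left; apply/eqP; ring.
Qed.

Lemma point_le j d : (forall m, (d m < n)%N) ->
  ipA A (e j.+1 d) (e j.+1 d) <= ipA A (e j d) (e j d) - s j d ^+ 2
   + \sum_(k j <= t < j) (s j d ^+ 2 * `|ipA A (u t d) (u j d)|
                           + s t d ^+ 2 * `|ipA A (u t d) (u j d)|).
Proof.
move=> hd; rewrite key_eq // lerD2l mulr_sumr; apply: ler_sum => t _.
rewrite mulrA -mulrDl; exact: abc_le.
Qed.

Definition rho := rhoA A.

Lemma rho_ge0 : 0 <= rho.
Proof.
rewrite /rho /rhoA; elim/big_ind: _ => //.
  by move=> a b ha hb; rewrite le_max ha.
by move=> i _; rewrite mulr_ge0 ?invr_ge0 ?ler0n // sumr_ge0.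

Qed.

Lemma rho_row (l : 'I_n) : n%:R^-1 * \sum_(i < n) `|A l i| <= rho.
Proof. exact: (le_bigmax 0 (fun l : 'I_n => n%:R^-1 * \sum_(r < n) `|A l r|) l). Qed.

Lemma rho_col (l : 'I_n) : n%:R^-1 * \sum_(i < n) `|A i l| <= rho.
Proof.
rewrite (eq_bigr (fun i => `|A l i|)); first exact: rho_row.
by move=> i _; rewrite -{1}hsym mxE.
Qed.

Lemma upd_lt d p (i : 'I_n) : (forall m, (d m < n)%N) -> forall m, (upd d p i m < n)%N.
Proof. by move=> hd m; rewrite /upd; case: (m == p). Qed.

Notation G t := (Exp n t.+1 (fun d => s t d ^+ 2)).

Lemma G_ge0 t : 0 <= G t.
Proof.
have h := @Exp_le R n hn t.+1 (fun _ => 0) (fun d => s t d ^+ 2) (fun d _ => sqr_ge0 _).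
apply: le_trans h; by rewrite ExpS /SS big1 ?mulr0.
Qed.

Lemma bound1 j t : (k j <= t < j)%N ->
  Exp n j.+1 (fun d => s j d ^+ 2 * `|ipA A (u t d) (u j d)|) <= rho * G j.
Proof.
move=> /andP [h1 h2]; rewrite (@Exp_avg R n hn j.+1 t _ (ltnW h2)).
rewrite -Exp_scale; apply: Exp_le => // d hd.
have hjt : (j == t) = false by apply/negbTE; rewrite neq_ltn h2 orbT.
have hs : forall i : 'I_n, s j (upd d t i) = s j d.
  move=> i; apply: s_dep; last by rewrite /upd hjt.
  move=> m hm; rewrite /upd; have -> // : (m == t) = false.
  by apply/negbTE; rewrite neq_ltn (leq_trans hm h1).
rewrite (eq_bigr (fun i : 'I_n => s j d ^+ 2 * `|A (Ordinal (hd j)) i|)); last first.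
  move=> i _; rewrite hs /u /upd eqxx hjt.
  by rewrite -[d j]/(nat_of_ord (Ordinal (hd j))) ipa_evec.
rewrite -mulr_sumr mulrCA [rho * _]mulrC; apply: ler_wpM2l; first exact: sqr_ge0.
exact: rho_row.
Qed.

Lemma bound2 j t : (k j <= t < j)%N ->
  Exp n j.+1 (fun d => s t d ^+ 2 * `|ipA A (u t d) (u j d)|) <= rho * G t.
Proof.
move=> /andP [h1 h2]; rewrite (@Exp_avg R n hn j.+1 j _ (ltnSn j)).
have -> : G t = Exp n j.+1 (fun d => s t d ^+ 2).
  rewrite -(subnKC (leqW h2)) Exp_margk // => d d' h.
  rewrite (@s_dep t d d') //; last exact: h.
  move=> m hm; apply: h; exact: leq_trans hm (leq_trans (hk t) (leqnSn t)).
rewrite -Exp_scale; apply: Exp_le => // d hd.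
have htj : (t == j) = false by apply/negbTE; rewrite neq_ltn h2.
have hs : forall i : 'I_n, s t (upd d j i) = s t d.
  move=> i; apply: s_dep; last by rewrite /upd htj.
  move=> m hm; rewrite /upd; have -> // : (m == j) = false.
  by apply/negbTE; rewrite neq_ltn (leq_trans hm (leq_trans (hk t) (ltnW h2))).
rewrite (eq_bigr (fun i : 'I_n => s t d ^+ 2 * `|A i (Ordinal (hd t))|)); last first.
  move=> i _; rewrite hs /u /upd eqxx htj.
  by rewrite -[d t]/(nat_of_ord (Ordinal (hd t))) ipa_evec.
rewrite -mulr_sumr mulrCA [rho * _]mulrC; apply: ler_wpM2l; first exact: sqr_ge0.
exact: rho_col.
Qed.

Notation E m := (Exp n m (fun d => ipA A (e m d) (e m d))).

Lemma step j tau : (j <= k j + tau)%N ->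
  E j.+1 <= E j - (1 - rho * tau%:R) * G j + rho * \sum_(k j <= t < j) G t.
Proof.
move=> hkt.
have h := @Exp_le R n hn j.+1 _ _ (fun d hd => point_le j hd).
apply: le_trans h _.
rewrite Exp_add Exp_add Exp_opp Exp_sum.
rewrite (@Exp_marg R n hn j); last by move=> d d' hd; rewrite (e_dep hd).
under eq_bigr do rewrite Exp_add.
have hs : \sum_(k j <= t < j) (Exp n j.+1 (fun d => s j d ^+ 2 * `|ipA A (u t d) (u j d)|)
      + Exp n j.+1 (fun d => s t d ^+ 2 * `|ipA A (u t d) (u j d)|))
   <= \sum_(k j <= t < j) (rho * G j + rho * G t).
  by apply: ler_sum_nat => t ht; apply: lerD; [apply: bound1 | apply: bound2].
apply: le_trans (lerD (lexx _) hs) _.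
rewrite big_split /= sumr_const_nat -mulr_sumr.
have hG := G_ge0 j; have hr := rho_ge0.
have hjk : ((j - k j)%:R : R) <= tau%:R by rewrite ler_nat; lia.
rewrite -mulr_natr.
have : rho * G j * (j - k j)%:R <= rho * tau%:R * G j.
  by rewrite mulrAC; apply: ler_wpM2r => //; apply: ler_wpM2l.
lra.
Qed.
Lemma sum_ind (F : nat -> R) a b m : (a <= b)%N -> (b <= m)%N ->
  \sum_(a <= t < b) F t = \sum_(t < m) ((a <= t < b)%N%:R * F t).
Proof.
move=> hab hbm.
rewrite -(big_mkord xpredT (fun t => ((a <= t < b)%N%:R * F t))).
rewrite (@big_cat_nat _ _ _ a 0 m) ?leq0n ?(leq_trans hab hbm) //.
rewrite (@big_cat_nat _ _ _ b a m) //.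
rewrite /=.
have z1 : \sum_(0 <= t < a) ((a <= t < b)%N%:R * F t) = 0.
  rewrite big_nat_cond big1 // => t /andP [/andP [_ ht] _].
  by rewrite leqNgt ht /= mul0r.
have z2 : \sum_(b <= t < m) ((a <= t < b)%N%:R * F t) = 0.
  rewrite big_nat_cond big1 // => t /andP [/andP [ht _] _].
  by rewrite ltnNge ht andbF mul0r.
rewrite z1 z2 add0r addr0.
by apply: eq_big_nat => t ht; rewrite ht mul1r.
Qed.

Lemma cnt_nat t tau m :
  (\sum_(i < m) ((t < i) && (i <= t + tau)) = minn m (t + tau).+1 - minn m t.+1)%N.
Proof.
elim: m => [|m IH]; first by rewrite big_ord0.
rewrite big_ord_recr /= IH.
case: (ltnP t m) => h1; case: (leqP m (t + tau)) => h2 /=; lia.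
Qed.

Lemma cnt_le t tau m : (forall j, (j <= k j + tau)%N) ->
  \sum_(i < m) ((k i <= t < i)%N%:R : R) <= tau%:R.
Proof.
move=> hkt; rewrite -natr_sum ler_nat.
apply: leq_trans (_ : (\sum_(i < m) ((t < i) && (i <= t + tau)) <= tau)%N).
  apply: leq_sum => i _.
  case/boolP: ((k i <= t < i)%N) => //= /andP [h1 h2].
  by rewrite h2 /=; have := hkt i; lia.
rewrite cnt_nat; lia.
Qed.

Lemma total m tau : (forall j, (j <= k j + tau)%N) ->
  E m <= E 0 - (1 - 2 * rho * tau%:R) * \sum_(i < m) G i.
Proof.
move=> hkt.
have Q : E m <= E 0 - (1 - rho * tau%:R) * \sum_(i < m) G i
            + rho * \sum_(i < m) \sum_(k i <= t < i) G t.
  elim: m => [|m IH]; first by rewrite !big_ord0; lra.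
  apply: le_trans (step (hkt m)) _.
  rewrite !big_ord_recr /=; lra.
have D : \sum_(i < m) \sum_(k i <= t < i) G t <= tau%:R * \sum_(i < m) G i.
  rewrite (eq_bigr (fun i : 'I_m => \sum_(t < m) ((k i <= t < i)%N%:R * G t))); last first.
    by move=> i _; apply: sum_ind => //; apply: ltnW.
  rewrite exchange_big mulr_sumr; apply: ler_sum => t _.
  rewrite -mulr_suml; apply: ler_wpM2r; first exact: G_ge0.
  exact: cnt_le.
have hr := rho_ge0.
have : rho * (\sum_(i < m) \sum_(k i <= t < i) G t) <= rho * (tau%:R * \sum_(i < m) G i).
  exact: ler_wpM2l.
lra.
Qed.
End Main.

Theorem mainTheorem7 (R : realFieldType) (n : nat) (A : 'M[R]_n)
  (b x0 : 'cV[R]_n) (tau : nat) (k : nat -> nat) :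
  (2 <= n)%N ->
  A^T = A ->
  (forall v : 'cV[R]_n, v != 0 -> 0 < (v^T *m A *m v) 0 0) ->
  (forall i : 'I_n, A i i = 1) ->
  (forall j : nat, (j <= k j + tau)%N /\ (k j <= j)%N) ->
  let xs := invmx A *m b in
  let x := iterate A xs x0 1 k in
  let E := fun m : nat => Exp n m (fun d => ipA A (x m d - xs) (x m d - xs)) in
  let G := fun t : nat =>
    Exp n t.+1 (fun d => (ipA A (x (k t) d - xs) (@evec R n (d t))) ^+ 2) in
  let rho := rhoA A in
  (forall j : nat,
     E j.+1 <= E j - (1 - rho * tau%:R) * G j + rho * \sum_(k j <= t < j) G t)
  /\
  (forall m : nat, (1 <= m)%N ->
     E m <= E 0 - (1 - 2 * rho * tau%:R) * \sum_(i < m) G i).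
Proof.
move=> hn2 hsym hpd hdiag hkt xs x E G rho.
have hn : (0 < n)%N by apply: leq_trans hn2.
have hk : forall j, (k j <= j)%N by move=> j; case: (hkt j).
have hkt' : forall j, (j <= k j + tau)%N by move=> j; case: (hkt j).
split.
- move=> j; exact: (step xs x0 hn hsym hdiag hk (hkt' j)).
- move=> m _; exact: (total xs x0 hn hsym hdiag hk m hkt').
Qed.
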